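(* Let $n$ be even. Then there is no nondegenerate $n$-dimensional simplex $S$ with $\mathrm{ver}(S)\subset\mathrm{ver}(Q_n)$ and $S\subset Q_n\subset nS$.
   Context: $Q_n=[0,1]^n$; $\mathrm{ver}(\cdot)$ is the vertex set. $nS$ denotes the image of $S$ under the homothety with center at the center of gravity of $S$ and ratio $n$. *)

(* Defs.v *)
From HB Require Import structures.
From mathcomp Require Import all_boot all_order all_algebra.
From mathcomp Require Import reals.
Set Implicit Arguments. Unset Strict Implicit. Unset Printing Implicit Defensive.
Import Order.TTheory GRing.Theory Num.Theory.
Local Open Scope ring_scope.

(* Points of R^n are row vectors 'rV[R]_n; coordinate j of x is x ord0 j.
   A (candidate) n-simplex is given by its n+1 vertices v : 'I_n.+1 -> 'rV_n. *)

Definition in_cube (R : realType) (n : nat) (x : 'rV[R]_n) : Prop :=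
  forall j : 'I_n, 0 <= x ord0 j <= 1.

Definition cube_vertex (R : realType) (n : nat) (x : 'rV[R]_n) : Prop :=
  forall j : 'I_n, x ord0 j = 0 \/ x ord0 j = 1.

(* nondegenerate: the vertices are affinely independent *)
Definition aff_indep (R : realType) (n : nat) (v : 'I_n.+1 -> 'rV[R]_n) : Prop :=
  forall mu : 'I_n.+1 -> R,
    \sum_i mu i = 0 -> \sum_i mu i *: v i = 0 -> forall i, mu i = 0.

Definition in_simplex (R : realType) (n : nat) (v : 'I_n.+1 -> 'rV[R]_n)
  (x : 'rV[R]_n) : Prop :=
  exists l : 'I_n.+1 -> R,
    (forall i, 0 <= l i) /\ \sum_i l i = 1 /\ x = \sum_i l i *: v i.

Definition simplex_center (R : realType) (n : nat) (v : 'I_n.+1 -> 'rV[R]_n)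
  : 'rV[R]_n := (n.+1%:R)^-1 *: \sum_i v i.

Definition in_homothetic (R : realType) (n : nat) (sigma : R)
  (v : 'I_n.+1 -> 'rV[R]_n) (x : 'rV[R]_n) : Prop :=
  exists y, in_simplex v y /\
    x = simplex_center v + sigma *: (y - simplex_center v).

(* Main.v *)
Require Import Defs.
From HB Require Import structures.
From mathcomp Require Import all_boot all_order all_algebra.
From mathcomp Require Import reals.
From mathcomp Require Import ring lra.
Import Order.TTheory GRing.Theory Num.Theory.
Local Open Scope ring_scope.

Theorem mainTheorem3 (R : realType) (n : nat) :
  ~~ odd n -> (0 < n)%N ->
  ~ (exists v : 'I_n.+1 -> 'rV[R]_n,
       (forall i, cube_vertex (v i)) /\
       aff_indep v /\
       (forall x, in_simplex v x -> in_cube x) /\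
       (forall x, in_cube x -> in_homothetic n%:R v x)).
Proof.
move=> nev n0 [v [Hv [Hind [_ Hhom]]]].
set a : R := (n.+1%:R)^-1.
have Ha : (n.+1%:R : R) * a = 1 by rewrite mulfV // pnatr_eq0.
set one : 'rV[R]_n := const_mx 1.
pose w j := one - v j.
have wc j : in_cube (w j).
  move=> k; rewrite /w !mxE; case: (Hv j k) => ->.
    by rewrite subr0 ler01 lexx.
  by rewrite subrr lexx ler01.
have: forall j, exists mu : 'I_n.+1 -> R,
    (forall i, (1 - n%:R) * a <= mu i) /\ \sum_i mu i = 1 /\
    w j = \sum_i mu i *: v i.
  move=> j; have [y [[l [l0 [l1 ey]]] ew]] := Hhom _ (wc j).
  exists (fun i => n%:R * l i + (1 - n%:R) * a); split.
    by move=> i; rewrite lerDr mulr_ge0 // ler0n.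
  split.
    rewrite big_split /= -mulr_sumr l1 sumr_const card_ord.
    rewrite -[_ *+ n.+1]mulr_natr -mulrA [a * _]mulrC Ha; ring.
  rewrite ew ey /simplex_center -/a.
  rewrite [RHS](eq_bigr (fun i => n%:R *: (l i *: v i) + (1 - n%:R) *: (a *: v i))); last first.
    by move=> i _; rewrite scalerDl !scalerA.
  rewrite big_split /= -!scaler_sumr scalerBr scalerBl scale1r.
  by rewrite addrCA.
move=> /fin_all_exists [mu Hmu].
pose g j i := (i == j)%:R + mu j i.
have gs j : \sum_i g j i = 2.
  rewrite big_split /= (proj1 (proj2 (Hmu j))) (bigD1 j) //= eqxx big1 ?addr0 //.
  by move=> i /negbTE ->.
have gv j : \sum_i g j i *: v i = one.
  rewrite (eq_bigr (fun i => (i == j)%:R *: v i + mu j i *: v i)); last first.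
    by move=> i _; rewrite scalerDl.
  rewrite big_split /= -(proj2 (proj2 (Hmu j))) (bigD1 j) //= eqxx scale1r big1 ?addr0.
    by rewrite /w addrC subrK.
  by move=> i /negbTE ->; rewrite scale0r.
have guniq j i : g j i = g ord0 i.
  apply/eqP; rewrite -subr_eq0; apply/eqP.
  apply: (Hind (fun i => g j i - g ord0 i)).
    by rewrite sumrB !gs subrr.
  rewrite (eq_bigr (fun i => g j i *: v i - g ord0 i *: v i)); last first.
    by move=> i0 _; rewrite scalerBl.
  by rewrite sumrB !gv subrr.
have gge i : 2 * a <= g ord0 i.
  rewrite -(guniq i) /g eqxx.
  have := proj1 (Hmu i) i.
  have -> : 2 * a = 1 + (1 - n%:R) * a.
    transitivity (n.+1%:R * a + (1 - n%:R) * a); last by rewrite Ha.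
    rewrite -natr1; ring.
  by move=> h; rewrite lerD2l.
have Z : forall i, xpredT i -> g ord0 i - 2 * a = 0.
  apply: psumr_eq0P.
    by move=> i _; rewrite subr_ge0.
  rewrite sumrB gs sumr_const card_ord -[_ *+ n.+1]mulr_natr -mulrA [a * _]mulrC Ha.
  by rewrite mulr1 subrr.
have geq i : g ord0 i = 2 * a.
  by apply/eqP; rewrite -subr_eq0; apply/eqP; exact: Z.
have E : (2 * a) *: \sum_i v i = one.
  rewrite scaler_sumr -(gv ord0); apply: eq_bigr => i _; by rewrite geq.
pose k := Ordinal n0.
have := congr1 (fun M : 'rV[R]_n => M ord0 k) E.
rewrite /= !mxE summxE.
have -> : \sum_i v i ord0 k = ((\sum_i nat_of_bool (v i ord0 k == 1%R))%N)%:R.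
  rewrite natr_sum; apply: eq_bigr => i _; case: (Hv i k) => ->.
    by rewrite eq_sym oner_eq0.
  by rewrite eqxx.
set s := (\sum_i _)%N => E1.
have : (n.+1%:R : R) = (2 * s)%:R.
  transitivity (n.+1%:R * (2 * a * s%:R) : R); first by rewrite E1 mulr1.
  rewrite natrM.
  transitivity ((n.+1%:R * a) * (2%:R * s%:R) : R); first by ring.
  by rewrite Ha mul1r.
move/eqP; rewrite eqr_nat => /eqP H.
have := congr1 odd H; rewrite oddS oddM /= => /negbFE.
by rewrite (negbTE nev).
Qed.
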